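(* Assume (A1)–(A4) and $(RC_+)$. Let $\pi^+:=\mathbf{1}_{R^+}$, $f(x,y):=\log\big((1-\pi^+(x))+\pi^+(x)e^{y-x}\big)$, and let $\nu$ be the invariant probability measure of $\Phi_t$, which is equivalent to $\lambda_2$. Then $\nu(f)=\int_{\mathbb{R}^2}f\,d\nu>0$.
   Context: Setting: $\mu,\sigma:\mathbb{R}\to\mathbb{R}$ measurable, $(\varepsilon_t)_{t\ge1}$ i.i.d., $X_0$ constant, $X_t=X_{t-1}+\mu(X_{t-1})+\sigma(X_{t-1})\varepsilon_t$; $X_{-1}$ arbitrary constant, $\Phi_t=(X_{t-1},X_t)$; $\lambda,\lambda_2$ Lebesgue measure on $\mathbb{R},\mathbb{R}^2$. (A1) $\varepsilon_1$ has a density w.r.t. $\lambda$, bounded and bounded away from $0$ on compacts; (A2) $\mu$ locally bounded, $\sigma$ positive, bounded away from $0$ on compacts, globally bounded; (A3) $\limsup_{|x|\to\infty}|x+\mu(x)|/|x|<1$; (A4) $\mathbb{E}e^{\kappa\varepsilon_1^2}<\infty$ for some $\kappa>0$, $\mathbb{E}\varepsilon_1=0$. $(RC_+)$: $R^+:=\{x:\mu(x)>0\}$ satisfies $\lambda(R^+)>0$. *)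

(* Defs.v *)
From HB Require Import structures.
From mathcomp Require Import all_boot all_order all_algebra.
From mathcomp Require Import all_classical all_reals all_analysis.
Set Implicit Arguments. Unset Strict Implicit. Unset Printing Implicit Defensive.
Import Order.TTheory GRing.Theory Num.Theory.
Local Open Scope classical_set_scope.
Local Open Scope ring_scope.

Definition piplus (R : realType) (mu : R -> R) (x : R) : R :=
  if 0 < mu x then 1 else 0.

Definition fplus (R : realType) (mu : R -> R) (z : R * R) : R :=
  ln ((1 - piplus mu z.1) + piplus mu z.1 * expR (z.2 - z.1)).

(* transition kernel of Phi_t = (X_{t-1}, X_t):
   P((x,y), A) = P_eps { e | (y, y + mu y + sigma y * e) \in A } *)
Definition Phi_step (R : realType) (mu sigma : R -> R) (z : R * R) (e : R)
  : R * R := (z.2, z.2 + mu z.2 + sigma z.2 * e).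

Definition Phi_kernel (R : realType) (mu sigma : R -> R)
  (Pe : probability R R) (z : R * R) (A : set (R * R)) : \bar R :=
  Pe (Phi_step mu sigma z @^-1` A).

Definition Phi_invariant (R : realType) (mu sigma : R -> R)
  (Pe : probability R R) (nu : probability (R * R)%type R) : Prop :=
  forall A : set (R * R), measurable A ->
    nu A = (\int[nu]_z Phi_kernel mu sigma Pe z A)%E.

(* Main.v *)
Require Import Defs.
From HB Require Import structures.
From mathcomp Require Import all_boot all_order all_algebra.
From mathcomp Require Import all_classical all_reals all_analysis.
From mathcomp Require Import measurable_realfun.
From mathcomp Require Import lra ring.
Set Implicit Arguments. Unset Strict Implicit. Unset Printing Implicit Defensive.
Import Order.TTheory GRing.Theory Num.Theory.
Local Open Scope classical_set_scope.
Local Open Scope ring_scope.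

Definition GG (R : realType) (mu sigma : R -> R) (w : (R * R) * R) : R * R :=
  Phi_step mu sigma w.1 w.2.

Lemma measurable_GG (R : realType) (mu sigma : R -> R) :
  measurable_fun setT mu -> measurable_fun setT sigma ->
  measurable_fun setT (GG mu sigma).
Proof.
move=> mmu msig.
have m2 : measurable_fun setT (fun w : (R * R) * R => w.1.2).
  exact: measurableT_comp.
apply/measurable_fun_pairP; split => //=.
apply: measurable_realfun.measurable_funD.
  apply: measurable_realfun.measurable_funD => //; exact: measurableT_comp.
apply: measurable_realfun.measurable_funM; first exact: measurableT_comp.
exact: measurable_snd.
Qed.

Lemma nu_push (R : realType) (mu sigma : R -> R) (Pe : probability R R)
  (nu : probability (R * R)%type R) :
  Phi_invariant mu sigma Pe nu ->
  forall A, measurable A -> nu A = pushforward (nu \x Pe)%E (GG mu sigma) A.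
Proof.
move=> inv A mA; rewrite inv // /pushforward /product_measure1 /=.
apply: eq_integral => z _ /=; rewrite /Phi_kernel; congr (Pe _).
by apply/seteqP; split => e /=; rewrite /xsection /= inE /GG /=.
Qed.

Lemma transfer0 (R : realType) (mu sigma : R -> R) (Pe : probability R R)
  (nu : probability (R * R)%type R) (F : (R * R)%type -> \bar R) :
  measurable_fun setT mu -> measurable_fun setT sigma ->
  Phi_invariant mu sigma Pe nu ->
  measurable_fun setT F -> (forall z, (0 <= F z)%E) ->
  (\int[nu]_z F z = \int[nu \x Pe]_w F (GG mu sigma w))%E.
Proof.
move=> mmu msig inv mF F0.
have mG := measurable_GG mmu msig.
have -> : (\int[nu]_z F z = \int[pushforward (nu \x Pe)%E (GG mu sigma)]_z F z)%E.
  apply: eq_measure_integral => A mA _ /=; exact: (nu_push inv mA).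
rewrite ge0_integral_pushforward //.
Qed.

Lemma prod_setT (R : realType) (Pe : probability R R)
  (nu : probability (R * R)%type R) : ((nu \x Pe) setT = 1)%E.
Proof.
rewrite -setXTT product_measure1E //.
transitivity (1 * 1 : \bar R)%E; last exact: mule1.
by congr (_ * _)%E; exact: probability_setT.
Qed.

Lemma tonelli_fst (R : realType) (Pe : probability R R)
  (nu : probability (R * R)%type R) (h : (R * R)%type -> \bar R) :
  measurable_fun setT h -> (forall z, (0 <= h z)%E) ->
  (\int[nu \x Pe]_w h w.1 = \int[nu]_z h z)%E.
Proof.
move=> mh h0.
rewrite fubini_tonelli1 //=; last exact: measurableT_comp.
apply: eq_integral => z _; rewrite /fubini_F /=.
rewrite integral_cst //= -[RHS]mule1; congr (_ * _)%E; exact: probability_setT.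
Qed.

Lemma tonelli_snd (R : realType) (Pe : probability R R)
  (nu : probability (R * R)%type R) (k : R -> \bar R) :
  measurable_fun setT k -> (forall z, (0 <= k z)%E) ->
  (\int[nu \x Pe]_w k w.2 = \int[Pe]_e k e)%E.
Proof.
move=> mk k0.
rewrite fubini_tonelli1 //=; last exact: measurableT_comp.
rewrite /fubini_F /= integral_cst //= -[RHS]mule1; congr (_ * _)%E; exact: probability_setT.
Qed.

Lemma abs_le_exp (R : realType) (k e : R) : 0 < k ->
  `|e| <= 1 + k^-1 * expR (k * e ^+ 2).
Proof.
move=> k0.
have h1 : `|e| <= 1 + e ^+ 2.
  rewrite -real_normK ?num_real //.
  have := normr_ge0 e; set a := `|e|; move=> a0.
  nra.
apply: (le_trans h1); rewrite lerD2l.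
rewrite ler_pdivlMl //.
apply: (le_trans _ (expR_ge1Dx _)); rewrite lerDr; exact: ltW.
Qed.

Lemma e_abs_fin (R : realType) (Pe : probability R R) :
  (exists kappa : R, 0 < kappa /\
      (\int[Pe]_e (expR (kappa * e ^+ 2))%:E < +oo)%E) ->
  (\int[Pe]_e `|e|%:E < +oo)%E.
Proof.
move=> [k [k0 hk]].
have mex : measurable_fun setT (fun e : R => expR (k * e ^+ 2)).
  apply: (measurableT_comp (@measurable_expR R)).
  apply: measurable_funM; first exact: measurable_cst.
  exact: measurable_funX.
apply: (@le_lt_trans _ _ (\int[Pe]_e ((cst 1 e) + ((k^-1)%:E * (expR (k * e ^+ 2))%:E)))%E).
  apply: ge0_le_integral => //.
  - by apply/measurable_EFinP; exact: (@normr_measurable R setT).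
  - apply: emeasurable_funD; first exact: measurable_cst.
    apply: emeasurable_funM; first exact: measurable_cst.
    exact/measurable_EFinP.
  - by move=> e _ /=; rewrite -EFinM -EFinD lee_fin abs_le_exp.
have mE : measurable_fun setT (fun e : R => (expR (k * e ^+ 2))%:E).
  exact/measurable_EFinP.
have mE2 : measurable_fun setT (fun e : R => ((k^-1)%:E * (expR (k * e ^+ 2))%:E)%E).
  by apply: emeasurable_funM => //; exact: measurable_cst.
have ki : 0 <= k^-1 by rewrite invr_ge0 ltW.
have E0 : forall e : R, setT e -> (0 <= (expR (k * e ^+ 2))%:E)%E.
  by move=> e _; rewrite lee_fin expR_ge0.
have E20 : forall e : R, setT e -> (0 <= (k^-1)%:E * (expR (k * e ^+ 2))%:E)%E.
  by move=> e _; rewrite mule_ge0 // lee_fin // expR_ge0.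
rewrite ge0_integralD //; try by move=> e _; rewrite /= lee_fin.
rewrite integral_cst // ge0_integralZl_EFin //.
rewrite lte_add_pinfty //.
  rewrite lte_mul_pinfty // ?lee_fin //.
  exact: (le_lt_trans (probability_le1 _ _) (ltry _)).
by rewrite lte_mul_pinfty // lee_fin.
Qed.

Lemma ptw (R : realType) (y u N r K : R) :
  0 <= r -> r < 1 -> 0 <= K -> 0 <= N -> `|u| <= r * `|y| + K ->
  Num.min `|u| N + (1 - r) * (if `|y| <= N then `|y| else 0) <= Num.min `|y| N + K.
Proof.
move=> r0 r1 K0 N0 hu.
have ha := normr_ge0 y.
have hm1 : Num.min `|u| N <= `|u| by rewrite ge_min lexx.
have hm2 : Num.min `|u| N <= N by rewrite ge_min lexx orbT.
case: ifPn => hy.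
  have -> : Num.min `|y| N = `|y| by apply/min_idPl.
  nra.
have -> : Num.min `|y| N = N.
  by apply/min_idPr; rewrite ltW // ltNge.
lra.
Qed.

Lemma drift_bound (R : realType) (mu sigma : R -> R) :
  (forall M : R, exists C : R, forall x, `|x| <= M -> `|mu x| <= C) ->
  (exists r : R, r < 1 /\ exists M : R, forall x, M <= `|x| ->
      `|x + mu x| / `|x| <= r) ->
  exists r K : R, [/\ 0 <= r, r < 1, 0 <= K &
     forall y, `|y + mu y| <= r * `|y| + K].
Proof.
move=> Hloc [r [r1 [M hM]]].
set M1 := Num.max M 1.
have M11 : 1 <= M1 by rewrite le_max lexx orbT.
have MM1 : M <= M1 by rewrite le_max lexx.
have [Cmu hC] := Hloc M1.
have Cmu0 : 0 <= Cmu.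
  apply: le_trans (hC 0 _); first exact: normr_ge0.
  by rewrite normr0; apply: le_trans M11.
have r0 : 0 <= r.
  have := hM M1; rewrite ger0_norm; last exact: (le_trans ler01 M11).
  move=> /(_ MM1) h; apply: le_trans h.
  by rewrite divr_ge0 // ltW // (lt_le_trans ltr01 M11).
exists r; exists (M1 + Cmu); split => //.
  by rewrite addr_ge0 // (le_trans _ M11).
move=> y.
have [ly|gy] := ltP `|y| M1.
  have := hC y (ltW ly).
  have := ler_normD y (mu y).
  have := normr_ge0 y.
  nra.
have ypos : 0 < `|y| by apply: lt_le_trans gy; apply: lt_le_trans M11.
have := hM y (le_trans MM1 gy).
rewrite ler_pdivrMr // => h.
nra.
Qed.

Definition hN (R : realType) (n : nat) (y : R) : R :=
  if `|y| <= n%:R then `|y| else 0.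
Definition WN (R : realType) (n : nat) (y : R) : R := Num.min `|y| n%:R.

Lemma measurable_hN (R : realType) n : measurable_fun setT (@hN R n).
Proof.
apply: measurable_fun_ifT.
- apply: measurable_fun_ler; first exact: normr_measurable.
  exact: measurable_cst.
- exact: normr_measurable.
- exact: measurable_cst.
Qed.

Lemma measurable_WN (R : realType) n : measurable_fun setT (@WN R n).
Proof.
apply: measurable_minr; first exact: normr_measurable.
exact: measurable_cst.
Qed.

Lemma measurable_snd2 (R : realType) :
  measurable_fun setT (fun z : (R * R)%type => z.2).
Proof. exact: measurable_snd. Qed.

Lemma measurable_fst_snd (R : realType) :
  measurable_fun setT (fun w : ((R * R) * R)%type => w.1.2).
Proof. exact: measurableT_comp. Qed.

Lemma key_bound (R : realType) (mu sigma : R -> R) (Pe : probability R R)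
  (nu : probability (R * R)%type R) (r K Cs : R) (n : nat) :
  measurable_fun setT mu -> measurable_fun setT sigma ->
  Phi_invariant mu sigma Pe nu ->
  (forall x, 0 < sigma x) -> (forall x, sigma x <= Cs) ->
  0 <= r -> r < 1 -> 0 <= K -> (forall y, `|y + mu y| <= r * `|y| + K) ->
  (((1 - r)%:E * \int[nu]_z (hN n z.2)%:E) <=
     K%:E + Cs%:E * \int[Pe]_e `|e|%:E)%E.
Proof.
move=> mmu msig inv spos hCs r0 r1 K0 hab.
have Cs0 : 0 <= Cs := le_trans (ltW (spos 0)) (hCs 0).
set P := (nu \x Pe)%E.
have mF : measurable_fun setT (fun z : (R * R)%type => (WN n z.2)%:E).
  apply/measurable_EFinP; apply: measurableT_comp; first exact: measurable_WN.
  exact: measurable_snd2.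
have mH : measurable_fun setT (fun z : (R * R)%type => (hN n z.2)%:E).
  apply/measurable_EFinP; apply: measurableT_comp; first exact: measurable_hN.
  exact: measurable_snd2.
have F0 : forall z : (R * R)%type, (0 <= (WN n z.2)%:E)%E.
  by move=> z; rewrite lee_fin /WN le_min normr_ge0 ler0n.
have H0 : forall z : (R * R)%type, (0 <= (hN n z.2)%:E)%E.
  by move=> z; rewrite lee_fin /hN; case: ifP.
set X := (\int[nu]_z (WN n z.2)%:E)%E.
have X0 : (0 <= X)%E by apply: integral_ge0 => z _.
have Xfin : X \is a fin_num.
  rewrite ge0_fin_numE //.
  apply: (@le_lt_trans _ _ (\int[nu]_z (cst ((n%:R : R)%:E)) z)%E).
    apply: ge0_le_integral => //.
    by move=> z _; rewrite lee_fin /WN ge_min lexx orbT.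
  rewrite integral_cst // lte_mul_pinfty // ?lee_fin //.
  exact: (le_lt_trans (probability_le1 _ _) (ltry _)).
have X1 : X = (\int[P]_w (WN n (GG mu sigma w).2)%:E)%E.
  exact: (transfer0 (F := fun z => (WN n z.2)%:E) mmu msig inv mF F0).
have X2 : X = (\int[P]_w (WN n w.1.2)%:E)%E.
  by rewrite /P (@tonelli_fst _ Pe nu (fun z => (WN n z.2)%:E)).
have H1 : (\int[nu]_z (hN n z.2)%:E = \int[P]_w (hN n w.1.2)%:E)%E.
  by rewrite /P (@tonelli_fst _ Pe nu (fun z => (hN n z.2)%:E)).
have E1 : (\int[Pe]_e `|e|%:E = \int[P]_w `|w.2|%:E)%E.
  rewrite /P (@tonelli_snd _ Pe nu (fun e => `|e|%:E)) //.
  by apply/measurable_EFinP; exact: (@normr_measurable R setT).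
have pt : forall w : ((R * R) * R)%type,
    ((WN n (GG mu sigma w).2)%:E + (1 - r)%:E * (hN n w.1.2)%:E <=
     (WN n w.1.2)%:E + (K%:E + Cs%:E * `|w.2|%:E))%E.
  move=> w; rewrite -!EFinM -!EFinD lee_fin.
  rewrite /WN /hN /GG /Phi_step /=.
  apply: ptw => //.
    by rewrite addr_ge0 // mulr_ge0.
  set y := w.1.2; set e := w.2.
  apply: (le_trans (ler_normD _ _)).
  rewrite normrM (gtr0_norm (spos y)).
  have := hab y; have := hCs y; have := normr_ge0 e; have := ltW (spos y).
  nra.
have mG2 : measurable_fun setT (fun w : ((R * R) * R)%type => (GG mu sigma w).2).
  apply: measurableT_comp; first exact: measurable_snd.
  exact: measurable_GG.
have mA : measurable_fun setT (fun w : ((R * R) * R)%type => (WN n (GG mu sigma w).2)%:E).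
  apply/measurable_EFinP; apply: measurableT_comp => //; exact: measurable_WN.
have mB : measurable_fun setT (fun w : ((R * R) * R)%type => ((1 - r)%:E * (hN n w.1.2)%:E)%E).
  apply: emeasurable_funM; first exact: measurable_cst.
  apply/measurable_EFinP; apply: measurableT_comp; first exact: measurable_hN.
  exact: measurable_fst_snd.
have mC : measurable_fun setT (fun w : ((R * R) * R)%type => (WN n w.1.2)%:E).
  apply/measurable_EFinP; apply: measurableT_comp; first exact: measurable_WN.
  exact: measurable_fst_snd.
have mD : measurable_fun setT (fun w : ((R * R) * R)%type => (Cs%:E * `|w.2|%:E)%E).
  apply: emeasurable_funM; first exact: measurable_cst.
  apply/measurable_EFinP; apply: measurableT_comp; first exact: normr_measurable.
  exact: measurable_snd.
have r1' : 0 <= 1 - r by rewrite subr_ge0 ltW.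
have A0 : forall w : ((R * R) * R)%type, (0 <= (WN n (GG mu sigma w).2)%:E)%E.
  by move=> w; rewrite lee_fin /WN le_min normr_ge0 ler0n.
have B0 : forall w : ((R * R) * R)%type, (0 <= (1 - r)%:E * (hN n w.1.2)%:E)%E.
  by move=> w; rewrite mule_ge0 // lee_fin /hN; case: ifP.
have C0 : forall w : ((R * R) * R)%type, (0 <= (WN n w.1.2)%:E)%E.
  by move=> w; rewrite lee_fin /WN le_min normr_ge0 ler0n.
have D0 : forall w : ((R * R) * R)%type, (0 <= Cs%:E * `|w.2|%:E)%E.
  by move=> w; rewrite mule_ge0 // lee_fin.
have I := ge0_le_integral P measurableT (fun w _ => adde_ge0 (A0 w) (B0 w))
  (emeasurable_funD mA mB)
  (emeasurable_funD mC (emeasurable_funD (measurable_cst _) mD)) (fun w _ => pt w).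
have K0' : forall w : ((R * R) * R)%type, setT w -> (0 <= cst K%:E w)%E.
  by move=> w _; rewrite lee_fin.
rewrite (ge0_integralD P measurableT (fun w _ => A0 w) mA (fun w _ => B0 w) mB) in I.
rewrite (ge0_integralD P measurableT (fun w _ => C0 w) mC
   (fun w _ => adde_ge0 (K0' w I) (D0 w)) (emeasurable_funD (measurable_cst _) mD)) in I.
rewrite (ge0_integralD P measurableT K0' (measurable_cst _) (fun w _ => D0 w) mD) in I.
rewrite -X1 -X2 leeD2lE // in I.
rewrite ge0_integralZl_EFin // in I; last first.
  apply/measurable_EFinP; apply: measurableT_comp; first exact: measurable_hN.
  exact: measurable_fst_snd.
rewrite ge0_integralZl_EFin // in I; last first.
  apply/measurable_EFinP; apply: measurableT_comp; first exact: normr_measurable.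
  exact: measurable_snd.
have IK : (\int[P]_w (cst K%:E w) = K%:E)%E.
  by rewrite integral_cst // -[RHS]mule1; congr (_ * _)%E; exact: prod_setT.
rewrite IK -H1 -E1 in I.
exact: I.
Qed.

Lemma moment_fin (R : realType) (mu sigma : R -> R) (Pe : probability R R)
  (nu : probability (R * R)%type R) :
  measurable_fun setT mu -> measurable_fun setT sigma ->
  Phi_invariant mu sigma Pe nu ->
  (forall M : R, exists C : R, forall x, `|x| <= M -> `|mu x| <= C) ->
  (forall x, 0 < sigma x) ->
  (exists C : R, forall x, sigma x <= C) ->
  (exists r : R, r < 1 /\ exists M : R, forall x, M <= `|x| ->
      `|x + mu x| / `|x| <= r) ->
  (\int[Pe]_e `|e|%:E < +oo)%E ->
  (\int[nu]_z `|z.2|%:E < +oo)%E.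
Proof.
move=> mmu msig inv Hloc spos [Cs hCs] A3 Ee.
have [r [K [r0 r1 K0 hab]]] := @drift_bound _ mu sigma Hloc A3.
have Cs0 : 0 <= Cs := le_trans (ltW (spos 0)) (hCs 0).
set B := (K%:E + Cs%:E * \int[Pe]_e `|e|%:E)%E.
have Bfin : (B < +oo)%E.
  by rewrite lte_add_pinfty ?ltry // lte_mul_pinfty ?lee_fin.
have r1' : 0 < 1 - r by rewrite subr_gt0.
have hb n : (\int[nu]_z (hN n z.2)%:E <= ((1 - r)^-1)%:E * B)%E.
  rewrite lee_pdivlMl //.
  exact: (@key_bound R mu sigma Pe nu r K Cs n mmu msig inv spos hCs r0 r1 K0 hab).
have mg : forall n, measurable_fun setT (fun z : (R * R)%type => (hN n z.2)%:E).
  move=> n; apply/measurable_EFinP; apply: measurableT_comp; first exact: measurable_hN.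
  exact: measurable_snd2.
have g0 : forall n (z : (R * R)%type), setT z -> (0 <= (hN n z.2)%:E)%E.
  by move=> n z _; rewrite lee_fin /hN; case: ifP.
have nd : forall z : (R * R)%type, setT z ->
    nondecreasing_seq (fun n => (hN n z.2)%:E).
  move=> z _ m k mk; rewrite lee_fin /hN.
  case: ifPn => hm.
    by rewrite ifT // (le_trans hm) // ler_nat.
  by case: ifP.
have mc := @cvg_monotone_convergence _ _ _ nu setT measurableT _ mg g0 nd.
have fE : forall z : (R * R)%type,
    limn (fun n => (hN n z.2)%:E) = `|z.2|%:E.
  move=> z; apply: cvg_lim => //; apply: cvg_near_cst.
  near=> n; rewrite /hN ifT //.
  near: n; exact: nbhs_infty_ger.
rewrite (eq_integral (fun z => limn (fun n => (hN n z.2)%:E))); last first.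
  by move=> z _; rewrite fE.
rewrite -(cvg_lim _ mc) //.
apply: (@le_lt_trans _ _ (((1 - r)^-1)%:E * B)%E).
  apply: lime_le; first exact: (cvgP _ mc).
  by apply: nearW => n; exact: hb.
by rewrite lte_mul_pinfty // lee_fin invr_ge0 ltW.
Unshelve. all: by end_near.
Qed.

Lemma fplusE (R : realType) (mu : R -> R) (z : (R * R)%type) :
  fplus mu z = piplus mu z.1 * (z.2 - z.1).
Proof.
rewrite /fplus /piplus; case: ifP => _.
  by rewrite subrr add0r !mul1r expRK.
by rewrite subr0 !mul0r addr0 ln1.
Qed.

Lemma measurable_piplus (R : realType) (mu : R -> R) :
  measurable_fun setT mu -> measurable_fun setT (piplus mu).
Proof.
move=> mmu; apply: measurable_fun_ifT.
- apply: measurable_fun_ltr => //; exact: measurable_cst.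
- exact: measurable_cst.
- exact: measurable_cst.
Qed.

Lemma measurable_Rplus (R : realType) (mu : R -> R) :
  measurable_fun setT mu -> measurable [set x : R | 0 < mu x].
Proof.
move=> mmu.
have -> : [set x : R | 0 < mu x] = setT `&` mu @^-1` `]0, +oo[%classic.
  by apply/seteqP; split => x /=; rewrite in_itv /= andbT //; case.
by apply: mmu => //; exact: measurable_itv.
Qed.

Lemma lebT (R : realType) : (lebesgue_measure (setT : set R) = +oo)%E.
Proof. by rewrite -set_itvNyy lebesgue_measure_itv /=. Qed.

Lemma transfer1 (R : realType) (mu sigma : R -> R) (Pe : probability R R)
  (nu : probability (R * R)%type R) (F : (R * R)%type -> \bar R) :
  measurable_fun setT mu -> measurable_fun setT sigma ->
  Phi_invariant mu sigma Pe nu ->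
  measurable_fun setT F ->
  (nu \x Pe)%E.-integrable setT (fun w => F (GG mu sigma w)) ->
  (\int[nu]_z F z = \int[nu \x Pe]_w F (GG mu sigma w))%E.
Proof.
move=> mmu msig inv mF iF.
have mG := measurable_GG mmu msig.
have -> : (\int[nu]_z F z = \int[pushforward (nu \x Pe)%E (GG mu sigma)]_z F z)%E.
  apply: eq_measure_integral => A mA _ /=; exact: (nu_push inv mA).
by rewrite integral_pushforward // ?preimage_setT.
Qed.

Unset Implicit Arguments.

Theorem lemmal2p14 (R : realType) (mu sigma : R -> R)
  (Pe : probability R R) (nu : probability (R * R)%type R) :
  measurable_fun setT mu -> measurable_fun setT sigma ->
  (exists g : R -> R,
      measurable_fun setT g /\ (forall x, 0 <= g x) /\
      (forall A : set R, measurable A ->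
         Pe A = (\int[lebesgue_measure]_(x in A) (g x)%:E)%E) /\
      (forall M : R, exists c C : R, 0 < c /\
         forall x, `|x| <= M -> c <= g x /\ g x <= C)) ->
  (forall M : R, exists C : R, forall x, `|x| <= M -> `|mu x| <= C) ->
  (forall x, 0 < sigma x) ->
  (forall M : R, exists c : R, 0 < c /\ forall x, `|x| <= M -> c <= sigma x) ->
  (exists C : R, forall x, sigma x <= C) ->
  (exists r : R, r < 1 /\ exists M : R, forall x, M <= `|x| ->
      `|x + mu x| / `|x| <= r) ->
  (exists kappa : R, 0 < kappa /\
      (\int[Pe]_e (expR (kappa * e ^+ 2))%:E < +oo)%E) ->
  (\int[Pe]_e e%:E = 0)%E ->
  (0 < lebesgue_measure [set x : R | (0 < mu x)%R])%E ->
  Phi_invariant mu sigma Pe nu ->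
  (forall A : set (R * R), measurable A ->
     (nu A = 0)%E <-> ((lebesgue_measure \x lebesgue_measure)%E A = 0)%E) ->
  nu.-integrable setT (fun z => (fplus mu z)%:E) /\
  (0 < \int[nu]_z (fplus mu z)%:E)%E.
Proof.
move=> mmu msig _ Hloc spos _ Hsb A3 A4 Emean RC inv equiv.
have Ee := e_abs_fin A4.
have Mom := moment_fin mmu msig inv Hloc spos Hsb A3 Ee.
have [r [K [r0 r1 K0 hab]]] := @drift_bound _ mu sigma Hloc A3.
have [Cs hCs] := Hsb.
have Cs0 : 0 <= Cs := le_trans (ltW (spos 0)) (hCs 0).
set P := (nu \x Pe)%E.
have mY : measurable_fun setT (fun w : ((R * R) * R)%type => `|w.1.2|%:E).
  apply/measurable_EFinP; apply: measurableT_comp; first exact: normr_measurable.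
  exact: measurable_fst_snd.
have mE : measurable_fun setT (fun w : ((R * R) * R)%type => `|w.2|%:E).
  apply/measurable_EFinP; apply: measurableT_comp; first exact: normr_measurable.
  exact: measurable_snd.
have iY : P.-integrable setT (fun w : ((R * R) * R)%type => `|w.1.2|%:E).
  apply/integrableP; split => //.
  under eq_integral do rewrite abse_EFin normr_id.
  rewrite /P (@tonelli_fst _ Pe nu (fun z => `|z.2|%:E)) //.
  apply/measurable_EFinP; apply: measurableT_comp; first exact: normr_measurable.
  exact: measurable_snd2.
have iE : P.-integrable setT (fun w : ((R * R) * R)%type => `|w.2|%:E).
  apply/integrableP; split => //.
  under eq_integral do rewrite abse_EFin normr_id.
  rewrite /P (@tonelli_snd _ Pe nu (fun e => `|e|%:E)) //.
  by apply/measurable_EFinP; exact: (@normr_measurable R setT).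
have iK : P.-integrable setT (fun w : ((R * R) * R)%type => K%:E).
  apply/integrableP; split; first exact: measurable_cst.
  rewrite (_ : (\int[P]_w `|K%:E|)%E = K%:E) ?ltry //.
  rewrite abse_EFin ger0_norm //.
  by rewrite integral_cst // -[RHS]mule1; congr (_ * _)%E; exact: prod_setT.
have ig : P.-integrable setT (fun w : ((R * R) * R)%type =>
    ((r + 1)%:E * `|w.1.2|%:E + (K%:E + Cs%:E * `|w.2|%:E))%E).
  apply: integrableD => //; first exact: integrableZl.
  apply: integrableD => //; exact: integrableZl.
have hmu : forall y, `|mu y| <= (r + 1) * `|y| + K.
  move=> y; have := hab y; have := ler_normB (y + mu y) y.
  rewrite addrC addKr => h1 h2.
  have := normr_ge0 y. nra.
have pp0 : forall x, 0 <= piplus mu x by move=> x; rewrite /piplus; case: ifP.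
have pp1 : forall x, piplus mu x <= 1 by move=> x; rewrite /piplus; case: ifP.
have mpp := measurable_piplus mmu.
have mfp : measurable_fun setT (fplus mu).
  rewrite (_ : fplus mu = fun z => piplus mu z.1 * (z.2 - z.1)); last first.
    by apply/funext => z; rewrite fplusE.
  apply: measurable_funM; first by apply: measurableT_comp => //; exact: measurable_fst.
  apply: measurable_funB; [exact: measurable_snd | exact: measurable_fst].
have mG := measurable_GG mmu msig.
have fG : forall w : ((R * R) * R)%type,
    fplus mu (GG mu sigma w) = piplus mu w.1.2 * mu w.1.2 + piplus mu w.1.2 * sigma w.1.2 * w.2.
  move=> w; rewrite fplusE /GG /Phi_step /=.
  rewrite -mulrA -mulrDr; congr (_ * _); ring.
have my : measurable_fun setT (fun w : ((R * R) * R)%type => w.1.2) by exact: measurable_fst_snd.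
have ma : measurable_fun setT (fun w : ((R * R) * R)%type => (piplus mu w.1.2 * mu w.1.2)%:E).
  apply/measurable_EFinP; apply: measurable_funM; exact: measurableT_comp.
have mb : measurable_fun setT (fun w : ((R * R) * R)%type =>
    (piplus mu w.1.2 * sigma w.1.2 * w.2)%:E).
  apply/measurable_EFinP; apply: measurable_funM; last exact: measurable_snd.
  apply: measurable_funM; exact: measurableT_comp.
have ia : P.-integrable setT (fun w : ((R * R) * R)%type => (piplus mu w.1.2 * mu w.1.2)%:E).
  apply: (le_integrable measurableT ma _ ig) => w _.
  rewrite -!EFinM -!EFinD !abse_EFin lee_fin normrM (ger0_norm (pp0 _)).
  rewrite (@ger0_norm _ ((r + 1) * `|w.1.2| + (K + Cs * `|w.2|))); last first.
    by rewrite addr_ge0 ?mulr_ge0 // ?addr_ge0 // ?mulr_ge0 // ltW // ltr_pwDl.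
  have := hmu w.1.2; have := pp0 w.1.2; have := pp1 w.1.2.
  have := normr_ge0 (mu w.1.2); have := normr_ge0 w.2; have := normr_ge0 w.1.2.
  nra.
have ib : P.-integrable setT (fun w : ((R * R) * R)%type =>
    (piplus mu w.1.2 * sigma w.1.2 * w.2)%:E).
  apply: (le_integrable measurableT mb _ ig) => w _.
  rewrite -!EFinM -!EFinD !abse_EFin lee_fin !normrM (ger0_norm (pp0 _)) (gtr0_norm (spos _)).
  rewrite (@ger0_norm _ ((r + 1) * `|w.1.2| + (K + Cs * `|w.2|))); last first.
    by rewrite addr_ge0 ?mulr_ge0 // ?addr_ge0 // ?mulr_ge0 // ltW // ltr_pwDl.
  have ps : piplus mu w.1.2 * sigma w.1.2 <= Cs.
    have := hCs w.1.2; have := ltW (spos w.1.2); have := pp0 w.1.2; have := pp1 w.1.2.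
    nra.
  have := ps; have := mulr_ge0 (pp0 w.1.2) (ltW (spos w.1.2)).
  have := normr_ge0 w.2; have := normr_ge0 w.1.2; have := r0; have := K0.
  nra.
have ifG : P.-integrable setT (fun w : ((R * R) * R)%type => (fplus mu (GG mu sigma w))%:E).
  rewrite (_ : (fun w => _) = (fun w : ((R * R) * R)%type =>
    (piplus mu w.1.2 * mu w.1.2)%:E + (piplus mu w.1.2 * sigma w.1.2 * w.2)%:E)%E).
    exact: integrableD.
  by apply/funext => w; rewrite fG.
have mfpE : measurable_fun setT (fun z : (R * R)%type => (fplus mu z)%:E).
  exact/measurable_EFinP.
have mfpA : measurable_fun setT (fun z : (R * R)%type => `|(fplus mu z)%:E|%E).
  exact: measurableT_comp.
split.
  apply/integrableP; split => //.
  rewrite (transfer0 (F := fun z => `|(fplus mu z)%:E|%E) mmu msig inv mfpA) //.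
  by move/integrableP : ifG => [].
rewrite (transfer1 (F := fun z => (fplus mu z)%:E) mmu msig inv mfpE ifG).
rewrite (eq_integral (fun w : ((R * R) * R)%type =>
    (piplus mu w.1.2 * mu w.1.2)%:E + (piplus mu w.1.2 * sigma w.1.2 * w.2)%:E)%E); last first.
  by move=> w _; rewrite fG EFinD.
rewrite integralD //.
have ie : Pe.-integrable setT (fun e : R => e%:E).
  apply/integrableP; split; first exact/measurable_EFinP.
  by under eq_integral do rewrite abse_EFin.
have Ib : (\int[P]_w (piplus mu w.1.2 * sigma w.1.2 * w.2)%:E = 0)%E.
  rewrite -(integral12_prod_meas1 ib).
  apply: integral0_eq => z _; rewrite /fubini_F /=.
  under eq_integral do rewrite EFinM.
  by rewrite integralZl // Emean mule0.
rewrite Ib adde0.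
rewrite /P (@tonelli_fst _ Pe nu (fun z => (piplus mu z.2 * mu z.2)%:E)); last 2 first.
- apply/measurable_EFinP; apply: measurable_funM; apply: measurableT_comp => //;
    exact: measurable_snd2.
- by move=> z; rewrite lee_fin /piplus; case: ifP => h; rewrite ?mul0r // mul1r ltW.
set q := fun z : (R * R)%type => piplus mu z.2 * mu z.2.
have q0 : forall z, 0 <= q z.
  by move=> z; rewrite /q /piplus; case: ifP => h; rewrite ?mul0r // mul1r ltW.
have mq : measurable_fun setT (fun z : (R * R)%type => (q z)%:E).
  apply/measurable_EFinP; apply: measurable_funM; apply: measurableT_comp => //;
    exact: measurable_snd2.
have -> : (\int[nu]_z (piplus mu z.2 * mu z.2)%:E = \int[nu]_z (q z)%:E)%E by [].
rewrite lt_def integral_ge0 ?andbT; last by move=> z _; rewrite lee_fin.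
apply/negP => /eqP H0.
have H0' : (\int[nu]_z `|(q z)%:E| = 0)%E.
  by rewrite -H0; apply: eq_integral => z _; rewrite abse_EFin ger0_norm.
have := (ae_eq_integral_abs nu measurableT mq).1 H0'.
case => N [mN N0 sub].
set A := (setT : set R) `*` [set x : R | 0 < mu x].
have mA : measurable A by apply: measurableX => //; exact: measurable_Rplus.
have AN : A `<=` N.
  move=> z [_ /= pz]; apply: sub => /= /(_ I) /eqP.
  by rewrite /q /piplus ifT // mul1r eqe gt_eqF.
have nA0 : nu A = 0%E := subset_measure0 mA mN AN N0.
have := (equiv A mA).1 nA0.
rewrite product_measure1E //; last exact: measurable_Rplus.
move=> h.
have : (+oo * lebesgue_measure [set x : R | (0 < mu x)%R] = 0)%E.
  by rewrite -h; congr (_ * _)%E; exact/esym/lebT.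
by rewrite gt0_mulye.
Qed.
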